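(* Let $n\ge3$ and $2\le f\le n-1$. The $f$-fault tolerant gathering problem to $f$ points ($f$FGP) is unsolvable under the SSYNC scheduler by any algorithm (of any size $\le n$); i.e., its MAS is $\infty$.
   Context: Model. A swarm consists of $n\ge1$ robots $r_1,\dots,r_n$, modeled as points in $\mathbb R^2$. Each robot $r_i$ has a local right-handed $x$-$y$ coordinate system $Z_i$ whose origin is always the robot's current position, with arbitrary (adversarially chosen, fixed) unit length and axis orientation; robots do not share coordinate systems. The configuration at time $t$ is the multiset $P_t$ of the $n$ robot positions (robots can detect multiplicities). A target function $\phi$ maps each finite multiset $P$ of points of $\mathbb R^2$ with $(0,0)\in P$ to a point $\phi(P)\in\mathbb R^2$. Time is discrete, $t=0,1,2,\dots$. Under the semi-synchronous (SSYNC) scheduler, at each time $t$ an adversary chooses a set of robots to activate; each activated robot $r_i$ observes $P_t$ expressed in $Z_i$, evaluates its target function on this multiset, and moves to the resulting point (interpreted in $Z_i$), arriving before time $t+1$; non-activated robots do not move. Schedules are fair: every robot is activated infinitely often. An algorithm of size $m$ is a set $\Phi$ of $m$ distinct target functions ($m\le n$); an assignment is a surjection $\mathcal A$ from the robots onto $\Phi$, robot $r_i$ using $\mathcal A(r_i)$. $\Phi$ solves a problem if for every assignment, every choice of local coordinate systems, every initial configuration and every fair SSYNC schedule, the resulting execution solves the problem. The MAS of a problem is the least $m$ such that some algorithm of size $m$ solves it, and $\infty$ if no algorithm of any size $m\le n$ solves it. For a multiset $P$, $\overline P$ is its set of distinct points. Crash faults. The adversary may choose up to $f$ robots to be faulty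 and, for each, a time from which it crashes: from then on it never moves again (even when activated); before that it behaves correctly. ''Solves under at most $f$ crashes'' quantifies additionally over all such crash patterns. Problem. $f$FGP: starting from any initial configuration, with at most $f$ crashed robots, reach a configuration $P$ in which all $n$ robots (faulty ones included) occupy at most $f$ distinct points, i.e., $|\overline P|\le f$. *)

(* Defs.v *)
From HB Require Import structures.
From mathcomp Require Import all_boot all_order all_algebra.
From mathcomp Require Import reals.
Set Implicit Arguments. Unset Strict Implicit. Unset Printing Implicit Defensive.
Import Order.TTheory GRing.Theory Num.Theory.
Local Open Scope ring_scope.

Section Robots.
Variable R : realType.

Definition pt := (R * R)%type.
Definition origin : pt := (0, 0).

(* A target function maps finite multisets of points (represented by lists,
   the function being required to be invariant under permutation) to points.
   Only its values on multisets containing the origin are relevant. *)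
Definition multiset_fun (phi : seq pt -> pt) : Prop :=
  forall s1 s2 : seq pt, perm_eq s1 s2 -> phi s1 = phi s2.

Definition same_target (phi psi : seq pt -> pt) : Prop :=
  forall P : seq pt, origin \in P -> phi P = psi P.

Definition algorithm (m : nat) (Phi : 'I_m -> seq pt -> pt) : Prop :=
  (forall k, multiset_fun (Phi k)) /\
  (forall k l, same_target (Phi k) (Phi l) -> k = l).

(* Local coordinate system of a robot: positive unit length [u] and an
   orientation given by a rotation (cos, sin) = (c, s), c^2 + s^2 = 1
   (right-handed: a rotation, no reflection).  Its origin is the robot's
   current position. *)
Record frame := Frame { fr_u : R; fr_c : R; fr_s : R }.
Definition valid_frame (F : frame) : Prop :=
  0 < fr_u F /\ fr_c F ^+ 2 + fr_s F ^+ 2 = 1.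

Definition to_local (F : frame) (p q : pt) : pt :=
  let dx := q.1 - p.1 in let dy := q.2 - p.2 in
  ((fr_c F * dx + fr_s F * dy) / fr_u F,
   (- fr_s F * dx + fr_c F * dy) / fr_u F).

Definition to_global (F : frame) (p v : pt) : pt :=
  (p.1 + fr_u F * (fr_c F * v.1 - fr_s F * v.2),
   p.2 + fr_u F * (fr_s F * v.1 + fr_c F * v.2)).

Definition crashed n (crash : 'I_n -> option nat) (i : 'I_n) (t : nat) : bool :=
  if crash i is Some t0 then (t0 <= t)%N else false.

Fixpoint exec n m (Phi : 'I_m -> seq pt -> pt) (asg : 'I_n -> 'I_m)
    (Z : 'I_n -> frame) (init : 'I_n -> pt) (act : nat -> 'I_n -> bool)
    (crash : 'I_n -> option nat) (t : nat) : 'I_n -> pt :=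
  match t with
  | 0 => init
  | t'.+1 =>
      let P := exec Phi asg Z init act crash t' in
      fun i =>
        if act t' i && ~~ crashed crash i t' then
          let view := [seq to_local (Z i) (P i) (P j) | j <- enum 'I_n] in
          to_global (Z i) (P i) (Phi (asg i) view)
        else P i
  end.

Definition n_distinct n (P : 'I_n -> pt) : nat :=
  size (undup [seq P i | i <- enum 'I_n]).

Definition solves_fFGP (n f m : nat) (Phi : 'I_m -> seq pt -> pt) : Prop :=
  forall (asg : 'I_n -> 'I_m), (forall k, exists i, asg i = k) ->
  forall (Z : 'I_n -> frame), (forall i, valid_frame (Z i)) ->
  forall (init : 'I_n -> pt),
  forall (act : nat -> 'I_n -> bool),
    (forall i t, exists t', (t <= t')%N /\ act t' i) ->
  forall (crash : 'I_n -> option nat),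
    (#|[pred i | crash i != None]| <= f)%N ->
  exists t, (n_distinct (exec Phi asg Z init act crash t) <= f)%N.

End Robots.

(* Main.v *)
Require Import Defs.
From HB Require Import structures.
From mathcomp Require Import all_boot all_order all_algebra.
From mathcomp Require Import reals.
From mathcomp Require Import zify.
From Stdlib Require Import ClassicalEpsilon Classical FunctionalExtensionality.
Set Implicit Arguments. Unset Strict Implicit. Unset Printing Implicit Defensive.
Import Order.TTheory GRing.Theory Num.Theory.

Section Adv.
Variables (R : realType) (n f m : nat) (Phi : 'I_m -> seq (pt R) -> pt R).
Variable asg : 'I_n -> 'I_m.
Variable Z : 'I_n -> frame R.
Hypothesis hfn : (f < n)%N.

Definition dest (P : 'I_n -> pt R) (i : 'I_n) : pt R :=
  to_global (Z i) (P i) (Phi (asg i) [seq to_local (Z i) (P i) (P j) | j <- enum 'I_n]).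

Definition core (i : 'I_n) : bool := (val i <= f)%N.
Definition fin P (A : {set 'I_n}) i := if i \in A then dest P i else P i.
Definition goodb P (A : {set 'I_n}) : bool :=
  [exists i, core i && (i \in A)] &&
  [forall i, forall j, (core i && core j && (fin P A i == fin P A j)) ==> (i == j)].
Definition S_of P : {set 'I_n} := if [pick A | goodb P A] is Some A then A else set0.
Definition injcore (P : 'I_n -> pt R) := forall i j, core i -> core j -> P i = P j -> i = j.

Definition x0 : 'I_n := Ordinal (leq_ltn_trans (leq0n f) hfn).
Lemma core_x0 : core x0. Proof. by rewrite /core /=. Qed.

Lemma exists_good P : injcore P -> exists A, goodb P A.
Proof.
move=> inj.
case: (boolP [exists x, core x && [forall y, (core y && (y != x)) ==> (dest P x != P y)]]).
- case/existsP=> x /andP[cx /forallP hx]. exists [set x].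
  apply/andP; split; first by apply/existsP; exists x; rewrite cx set11.
  apply/forallP=> i; apply/forallP=> j; apply/implyP=> /andP[/andP[ci cj] /eqP].
  rewrite /fin !inE.
  case: (eqVneq i x) => [->|nix]; case: (eqVneq j x) => [->|njx] //= e.
  + by move: (hx j); rewrite cj njx /= e eqxx.
  + by move: (hx i); rewrite ci nix /= e eqxx.
  + by apply/eqP; apply: inj.
- rewrite negb_exists => /forallP hno.
  have hg : forall x, core x -> exists y, core y && (dest P x == P y).
    move=> x cx; move: (hno x); rewrite cx /= negb_forall => /existsP[y].
    by rewrite negb_imply negbK => /andP[/andP[cy _] e]; exists y; rewrite cy e.
  pose g x := if [pick y | core y && (dest P x == P y)] is Some y then y else x.
  have gP : forall x, core x -> core (g x) /\ dest P x = P (g x).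
    move=> x cx; rewrite /g; case: pickP => [y /andP[cy /eqP e] | none] //.
    by case: (hg x cx) => y hy; move: (none y); rewrite hy.
  have itc : forall k, core (iter k g x0).
    elim=> [|k IH]; first exact: core_x0.
    by rewrite iterS; case: (gP _ IH).
  pose h (k : 'I_n.+1) := iter k g x0.
  have : ~ injective h.
    move=> hi; have := leq_card h hi; by rewrite !card_ord ltnn.
  move=> nih.
  have [k1 [k2 [e12 n12]]] : exists k1 k2 : 'I_n.+1, h k1 = h k2 /\ k1 != k2.
    apply: NNPP => hne; apply: nih => a b hab; apply/eqP; apply: negbNE; apply/negP => nab.
    by apply: hne; exists a, b.
  wlog lt12 : k1 k2 e12 n12 / (k1 < k2)%N.
    move=> W; case: (ltngtP k1 k2) => c; first exact: W c.
    - by apply: (W k2 k1) => //; rewrite eq_sym.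
    - by move: n12; rewrite (val_inj c) eqxx.
  pose y := iter k1 g x0.
  pose L := (k2 - k1)%N.
  have L0 : (0 < L)%N by rewrite subn_gt0.
  have yL : iter L g y = y.
    by rewrite /y -iterD subnK ?(ltnW lt12) //; move: e12; rewrite /h.
  pose A := [set z | [exists a : 'I_L, z == iter a g y]].
  have inS : forall z, reflect (exists a, (a < L)%N /\ z = iter a g y) (z \in A).
    move=> z; rewrite inE; apply: (iffP existsP) => [[a /eqP ->]|[a [aL ->]]].
      by exists a.
    by exists (Ordinal aL).
  have Score : forall z, z \in A -> core z.
    by move=> z /inS[a [_ ->]]; rewrite /y -iterD; apply: itc.
  have gS : forall z, z \in A -> g z \in A.
    move=> z /inS[a [aL ->]]; apply/inS.
    case: (ltnP a.+1 L) => c; first by exists a.+1; split=> //; rewrite iterS.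
    have eL : a.+1 = L by apply/eqP; rewrite eqn_leq c aL.
    by exists 0%N; split=> //; rewrite -iterS eL yL.
  have back : forall z, z \in A -> iter L.-1 g (g z) = z.
    move=> z /inS[a [aL ->]]; rewrite -iterS -iterD.
    by rewrite addnS -addSn prednK // addnC iterD yL.
  exists A; apply/andP; split.
    apply/existsP; exists y; rewrite (Score y) /=; last by apply/inS; exists 0%N.
    by apply/inS; exists 0%N.
  apply/forallP=> i; apply/forallP=> j; apply/implyP=> /andP[/andP[ci cj] /eqP].
  rewrite /fin.
  case: (boolP (i \in A)) => iS; case: (boolP (j \in A)) => jS e.
  + have [_ ei] := gP _ ci; have [cgj ej] := gP _ cj; have [cgi _] := gP _ ci.
    have gij : g i = g j by apply: inj => //; rewrite -ei -ej.
    by rewrite -(back _ iS) -(back _ jS) gij.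
  + have [cgi ei] := gP _ ci.
    have : g i = j by apply: inj => //; rewrite -ei.
    by move=> gij; move: (gS _ iS); rewrite gij (negbTE jS).
  + have [cgj ej] := gP _ cj.
    have : g j = i by apply: inj => //; rewrite -ej.
    by move=> gji; move: (gS _ jS); rewrite gji (negbTE iS).
  + by apply/eqP; apply: inj.
Qed.


Lemma good_S P : injcore P -> goodb P (S_of P).
Proof.
move=> inj; rewrite /S_of; case: pickP => [A // | none].
by case: (exists_good inj) => A hA; move: (none A); rewrite hA.
Qed.

Variable init : 'I_n -> pt R.
Hypothesis init_inj : injcore init.

Definition next P := fun i => if (~~ core i) || (i \in S_of P) then dest P i else P i.
Fixpoint traj t := match t with 0 => init | t'.+1 => next (traj t') end.

Lemma traj_inj t : injcore (traj t).
Proof.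
elim: t => [|t IH] //=.
move=> i j ci cj; rewrite /next ci cj /=.
have /andP[_ /forallP H] := good_S IH.
move: (H i) => /forallP /(_ j); rewrite ci cj /fin /= => /implyP hij e.
by apply/eqP; apply: hij; apply/eqP.
Qed.

Lemma traj_nonempty t : exists i, core i && (i \in S_of (traj t)).
Proof. by have /andP[/existsP[i hi] _] := good_S (@traj_inj t); exists i. Qed.

Definition ev_never i := exists t0, forall t, (t0 <= t)%N -> i \notin S_of (traj t).

Definition crash (i : 'I_n) : option nat :=
  match excluded_middle_informative (core i /\ ev_never i) with
  | left H => Some (proj1_sig (constructive_indefinite_description _ (proj2 H)))
  | right _ => None end.

Lemma crash_some i t0 : crash i = Some t0 ->
  core i /\ forall t, (t0 <= t)%N -> i \notin S_of (traj t).
Proof.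
rewrite /crash; case: excluded_middle_informative => // H [<-].
split; first exact: proj1 H.
move=> t; exact: (proj2_sig (constructive_indefinite_description _ (proj2 H)) t).
Qed.

Lemma crash_none i : crash i = None -> ~ (core i /\ ev_never i).
Proof. by rewrite /crash; case: excluded_middle_informative. Qed.

Definition act t i := (~~ core i) || (i \in S_of (traj t)) || crashed crash i t.

Lemma exec_traj t : exec Phi asg Z init act crash t = traj t.
Proof.
elim: t => [|t IH] //=.
rewrite IH; apply: functional_extensionality => i; rewrite /next /act.
case: (boolP (crashed crash i t)) => cr /=.
- move: cr; rewrite /crashed; case E: (crash i) => [t0|] // le.
  have [ci H] := crash_some E.
  by rewrite ci (negbTE (H _ le)) andbF.
- by rewrite orbF andbT.
Qed.


Lemma fair i t : exists t', (t <= t')%N /\ act t' i.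
Proof.
case: (boolP (core i)) => ci; last by exists t; rewrite /act ci.
case E: (crash i) => [t0|].
  exists (maxn t t0); split; first exact: leq_maxl.
  by rewrite /act /crashed E leq_maxr !orbT.
apply: NNPP => hn; apply: (crash_none E); split=> //.
exists t => t' le; apply/negP => hin; apply: hn; exists t'; split=> //.
by rewrite /act hin orbT.
Qed.

Lemma some_alive : exists i0, core i0 && (crash i0 == None).
Proof.
apply: NNPP => hn.
pose T := (\max_(i : 'I_n) odflt 0%N (crash i))%N.
have [i /andP[ci iS]] := traj_nonempty T.
case E: (crash i) => [t0|]; last by apply: hn; exists i; rewrite ci E.
have [_ H] := crash_some E.
have le : (t0 <= T)%N by move: (@leq_bigmax _ (fun i => odflt 0%N (crash i)) i); rewrite E.
by move: (H _ le); rewrite iS.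
Qed.

Lemma hle : (f.+1 <= n)%N. Proof. exact: hfn. Qed.

Lemma widen_ord_inj : injective (widen_ord hle).
Proof. by move=> a b /(congr1 val) /= /val_inj. Qed.

Lemma card_core : (#|[pred i | core i]| <= f.+1)%N.
Proof.
have -> : f.+1 = #|codom (widen_ord hle)| by rewrite card_codom ?card_ord //; exact: widen_ord_inj.
apply: subset_leq_card; apply/subsetP => i; rewrite inE => ci.
apply/codomP; have ci' : (val i < f.+1)%N by [].
by exists (Ordinal ci'); apply: val_inj.
Qed.

Lemma crash_bound : (#|[pred i | crash i != None]| <= f)%N.
Proof.
have [i0 /andP[c0 /eqP n0]] := some_alive.
have h1 : (#|[pred i | crash i != None]| <= #|[predD1 [pred i | core i] & i0]|)%N.
  apply: subset_leq_card; apply/subsetP => i; rewrite !inE => hi.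
  have ci : core i by case E: (crash i) hi => [t0|] // _; case: (crash_some E).
  by rewrite ci andbT; apply/eqP => e; move: hi; rewrite e n0.
have := card_core; rewrite (cardD1 i0) inE c0 add1n ltnS => h2.
exact: leq_trans h1 h2.
Qed.

Lemma distinct_bound P : injcore P -> (f < n_distinct P)%N.
Proof.
move=> inj; rewrite /n_distinct.
pose s1 := [seq P (widen_ord hle j) | j <- enum 'I_f.+1].
have -> : f.+1 = size s1 by rewrite size_map size_enum_ord.
apply: uniq_leq_size.
  rewrite map_inj_uniq ?enum_uniq // => a b e.
  apply: widen_ord_inj; apply: inj e; rewrite /core /= -ltnS; exact: ltn_ord.
move=> x /mapP[j _ ->]; rewrite mem_undup; apply: map_f; exact: mem_enum.
Qed.

End Adv.

Theorem theoremT4070 (R : realType) (n f : nat) :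
  (3 <= n)%N -> (2 <= f)%N -> (f <= n - 1)%N ->
  forall (m : nat) (Phi : 'I_m -> seq (pt R) -> pt R),
    (1 <= m <= n)%N -> algorithm Phi -> ~ solves_fFGP n f Phi.
Proof.
move=> h3 h2 hf m Phi /andP[m1 mn] _ H.
have hfn : (f < n)%N by lia.
pose a0 : 'I_m := Ordinal m1.
pose asg (i : 'I_n) : 'I_m := insubd a0 (val i).
have surj : forall k, exists i, asg i = k.
  move=> k; exists (widen_ord mn k); apply: val_inj.
  by rewrite /asg /= insubdK //=; exact: ltn_ord.
pose Z := fun _ : 'I_n => Frame (1%R : R) 1%R 0%R.
have valid : forall i, valid_frame (Z i).
  move=> i; rewrite /valid_frame /=; split; first exact: ltr01.
  by rewrite expr1n expr0n /= addr0.
pose init := fun i : 'I_n => (((val i)%:R)%R : R, 0%R : R).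
have init_inj : injcore f init.
  move=> i j _ _ [] /eqP; rewrite eqr_nat => /eqP; exact: val_inj.
have [t ht] := H asg surj Z valid init _ (@fair R n f m Phi asg Z init) _
  (@crash_bound R n f m Phi asg Z hfn init init_inj).
move: ht; rewrite exec_traj.
have := distinct_bound hfn (@traj_inj R n f m Phi asg Z hfn init init_inj t).
by move=> a b; move: (leq_trans a b); rewrite ltnn.
Qed.
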